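(* Let $d\geq 0$ and $0<i\leq d+1$ be integers such that $i$ divides $d+1$. Let $\Delta\in\mathcal{C}(i,d)$ with $f_j(\Delta)=f_j(S(i,d))$ for every $j$. Then $\Delta$ is isomorphic to $S(i,d)$.
   Context: All simplicial complexes are finite abstract simplicial complexes; $f_j(\Delta)$ denotes the number of $j$-dimensional faces of $\Delta$. A set $F$ of vertices is a missing face of $\Delta$ if $F\notin\Delta$ but every proper subset of $F$ is in $\Delta$; its dimension is $|F|-1$. $\mathcal{C}(i,d)$ denotes the family of $d$-dimensional simplicial complexes $\Delta$ with $\tilde H_d(\Delta;\mathbb{Z})\neq 0$ (reduced homology) and with no missing faces of dimension $>i$. For integers $d\geq 0$, $i>0$ with $d+1=qi+r$ ($q\geq 0$, $1\leq r\leq i$), $S(i,d)$ is the simplicial join of $q$ copies of $\partial\sigma^i$ and one copy of $\partial\sigma^r$ on pairwise disjoint vertex sets, where $\partial\sigma^k$ is the boundary complex of the $k$-simplex. *)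

(* Defs.v *)
From HB Require Import structures.
From mathcomp Require Import all_boot all_order all_algebra.
Set Implicit Arguments. Unset Strict Implicit. Unset Printing Implicit Defensive.
Import Order.TTheory GRing.Theory Num.Theory.

Definition simplicial_complex (V : finType) (D : {set {set V}}) : Prop :=
  set0 \in D /\ forall F G : {set V}, F \in D -> G \subset F -> G \in D.

Definition has_dim (V : finType) (D : {set {set V}}) (d : nat) : Prop :=
  (exists2 F, F \in D & #|F| = d.+1) /\ forall F, F \in D -> #|F| <= d.+1.

Definition fvec (V : finType) (D : {set {set V}}) (j : nat) : nat :=
  #|[set F in D | #|F| == j.+1]|.

(* Oriented simplicial boundary with integer coefficients, the vertices
   being ordered by enum_rank; the empty face is the unique (-1)-face,
   so this is the augmented (reduced) chain complex.
   (bd c) G = sum over faces F and x in F with F \ {x} = G of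
   (-1)^(position of x in F) * c F. *)
Definition vpos (V : finType) (F : {set V}) (x : V) : nat :=
  #|[set y in F | enum_rank y < enum_rank x]|.

Definition bd (V : finType) (c : {set V} -> int) (G : {set V}) : int :=
  (\sum_(F : {set V}) \sum_(x in F | F :\ x == G)
      (-1) ^+ vpos F x * c F)%R.

Definition dchain (V : finType) (D : {set {set V}}) (d : nat)
  (c : {set V} -> int) : Prop :=
  forall F, c F != 0%R -> (F \in D) && (#|F| == d.+1).

(* \tilde H_d(D; Z) <> 0, for D of dimension d: since there are no
   (d+1)-faces, \tilde H_d = ker(boundary on d-chains). *)
Definition top_homology_nonzero (V : finType) (D : {set {set V}}) (d : nat)
  : Prop :=
  exists c : {set V} -> int,
    [/\ dchain D d c, exists F, c F != 0%R & forall G, bd c G = 0%R].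

Definition missing_face (V : finType) (D : {set {set V}}) (F : {set V}) : Prop :=
  F \notin D /\ forall G : {set V}, G \proper F -> G \in D.

Definition inC (i d : nat) (V : finType) (D : {set {set V}}) : Prop :=
  [/\ simplicial_complex D, has_dim D d, top_homology_nonzero D d
    & forall F, missing_face D F -> #|F| - 1 <= i].

(* S(i,d): with d+1 = q i + r, 1 <= r <= i, i.e. q = d %/ i, r = d %% i + 1.
   Vertex set 'I_(q(i+1) + r+1), partitioned into blocks
   B_b = {v | v %/ (i+1) = b}, b = 0..q; blocks 0..q-1 have i+1 vertices
   (copies of the vertices of sigma^i), block q has r+1 vertices.
   A face of the join of the boundaries is a set containing no full block. *)
Definition S_q (i d : nat) : nat := d %/ i.
Definition S_r (i d : nat) : nat := (d %% i).+1.
Definition S_n (i d : nat) : nat := S_q i d * i.+1 + (S_r i d).+1.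

Definition S_block (i d : nat) (b : nat) : {set 'I_(S_n i d)} :=
  [set v : 'I_(S_n i d) | val v %/ i.+1 == b].

Definition S_complex (i d : nat) : {set {set 'I_(S_n i d)}} :=
  [set F : {set 'I_(S_n i d)} |
     [forall b : 'I_(S_q i d).+1, ~~ (S_block i d b \subset F)]].

Definition sc_isomorphic (V W : finType) (D : {set {set V}}) (E : {set {set W}})
  : Prop :=
  exists f : V -> W,
    {in \bigcup_(F in D) (F : {set V}) &, injective f} /\
    [set f @: (F : {set V}) | F in D] = E.

(* Main.v *)
Require Import Defs.
From mathcomp Require Import all_boot all_order all_algebra.
From mathcomp Require Import zify.
Set Implicit Arguments. Unset Strict Implicit. Unset Printing Implicit Defensive.

Lemma arith i d : 0 < i -> i %| d.+1 ->
  S_n i d = (S_q i d).+1 * i.+1 /\ d.+1 = (S_q i d).+1 * i.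
Proof.
move=> i0 /dvdnP [m Hm].
have m0 : 0 < m by case: m Hm => //.
have Hd : d = m.-1 * i + i.-1.
  by case: m Hm m0 => // m' Hm _; case: i i0 Hm => // i' _ Hm; lia.
have Hq : S_q i d = m.-1.
  by rewrite /S_q Hd divnMDl // divn_small ?addn0 //; lia.
have Hr : S_r i d = i.
  rewrite /S_r Hd modnMDl modn_small; lia.
rewrite /S_n Hq Hr; clear Hq Hr Hd; case: m Hm m0 => //= m Hm _; split; lia.
Qed.
Lemma S_n_gt0 i d : 0 < S_n i d.
Proof. rewrite /S_n; lia. Qed.

Definition mkS i d (x : nat) : 'I_(S_n i d) := insubd (Ordinal (S_n_gt0 i d)) x.

Lemma mkSK i d x : x < S_n i d -> val (mkS i d x) = x.
Proof. by move=> h; rewrite /mkS val_insubd h. Qed.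

Section Blocks.
Variables (i d : nat).
Hypothesis i0 : 0 < i.
Hypothesis Hn : S_n i d = (S_q i d).+1 * i.+1.

Lemma divK b j : j < i.+1 -> (b * i.+1 + j) %/ i.+1 = b.
Proof. by move=> hj; rewrite divnMDl // divn_small ?addn0. Qed.

Lemma block_img b : b < (S_q i d).+1 ->
  S_block i d b = [set mkS i d (b * i.+1 + j) | j : 'I_i.+1].
Proof.
move=> hb; apply/setP => v; rewrite inE; apply/eqP/imsetP.
- move=> hv; exists (Ordinal (ltn_pmod v (ltn0Sn i))) => //.
  by apply: val_inj; rewrite /= mkSK -?hv -?divn_eq // ltn_ord.

- case=> j _ ->; rewrite mkSK ?divK //.
  rewrite Hn. have := ltn_ord j. move: hb. clear. nia.
Qed.

Lemma block_card b : b < (S_q i d).+1 -> #|S_block i d b| = i.+1.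
Proof.
move=> hb; rewrite block_img // card_in_imset ?card_ord //.
move=> j1 j2 _ _ /(congr1 val); rewrite !mkSK; last first.
- rewrite Hn. have := ltn_ord j1. move: hb. clear. nia.
- rewrite Hn. have := ltn_ord j2. move: hb. clear. nia.
by move/addnI; apply: ord_inj.
Qed.

Lemma block_mem b : b < (S_q i d).+1 -> mkS i d (b * i.+1) \in S_block i d b.
Proof.
move=> hb; rewrite block_img //; apply/imsetP; exists ord0 => //.
by rewrite addn0.
Qed.

Lemma S_small (F : {set 'I_(S_n i d)}) : #|F| <= i -> F \in S_complex i d.
Proof.
move=> hF; rewrite inE; apply/forallP => b; apply/negP => /subset_leq_card.
by rewrite block_card //; lia.
Qed.

Lemma S_nonfaces :
  [set F : {set 'I_(S_n i d)} | #|F| == i.+1] :\: S_complex i d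
  = [set S_block i d b | b : 'I_(S_q i d).+1].
Proof.
apply/setP => F; rewrite !inE; apply/andP/imsetP.
- case; rewrite negb_forall => /existsP [b]; rewrite negbK => sub /eqP hF.
  exists b => //; apply/eqP; rewrite eq_sym eqEcard sub hF block_card //=.
- case=> b _ ->; rewrite block_card // eqxx; split => //.
  by rewrite negb_forall; apply/existsP; exists b; rewrite negbK.
Qed.

Lemma card_S_nonfaces :
  #|[set F : {set 'I_(S_n i d)} | #|F| == i.+1] :\: S_complex i d| = (S_q i d).+1.
Proof.
rewrite S_nonfaces card_imset ?card_ord // => b1 b2 h.
apply: val_inj; have := block_mem (ltn_ord b1); rewrite h inE => /eqP.
rewrite mkSK; first by rewrite mulnK.
rewrite Hn; have := ltn_ord b1; clear; nia.
Qed.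

Lemma fvec_S_small j : j < i -> fvec (S_complex i d) j = 'C(S_n i d, j.+1).
Proof.
move=> hj; rewrite /fvec.
have -> : 'C(S_n i d, j.+1) = 'C(#|'I_(S_n i d)|, j.+1) by rewrite card_ord.
rewrite -card_draws; apply: eq_card => F; rewrite !inE.
case: eqP; rewrite ?andbF ?andbT // => h. have := S_small (F:=F); rewrite inE; apply; by rewrite h.
Qed.

Lemma fvec_S_i : fvec (S_complex i d) i + (S_q i d).+1 = 'C(S_n i d, i.+1).
Proof.
rewrite -card_S_nonfaces.
have -> : 'C(S_n i d, i.+1) = 'C(#|'I_(S_n i d)|, i.+1) by rewrite card_ord.
rewrite -card_draws -[RHS](cardsID (S_complex i d)).
congr (_ + _); rewrite /fvec; apply: eq_card => F; rewrite !inE andbC //.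
Qed.

End Blocks.
Section DSide.
Variables (V : finType) (D : {set {set V}}) (i k : nat).
Definition VD := \bigcup_(F in D) F.
Definition NF := [set M : {set V} | (M \subset VD) && (#|M| == i.+1) && (M \notin D)].
Hypothesis hsc : simplicial_complex D.
Hypothesis i0 : 0 < i.
Hypothesis hmiss : forall F, missing_face D F -> #|F| - 1 <= i.
Hypothesis hdim : forall F, F \in D -> #|F| <= k * i.
Hypothesis hVD : #|VD| = k * i.+1.
Hypothesis hsmall : forall F : {set V}, F \subset VD -> #|F| <= i -> F \in D.
Hypothesis hN : #|NF| = k.

Lemma face_sub (F : {set V}) : F \in D -> F \subset VD.
Proof. by move=> h; apply: (bigcup_sup F h). Qed.

Lemma charD (F : {set V}) : (F \in D) = (F \subset VD) && [forall M in NF, ~~ (M \subset F)].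
Proof.
apply/idP/idP.
- move=> FD; rewrite face_sub //=; apply/forall_inP => M; rewrite inE => /andP [_ MD].
  apply/negP => MF; move/negP: MD; apply; exact: hsc.2 FD MF.
suff: forall m (F : {set V}), #|F| < m -> (F \subset VD) && [forall M in NF, ~~ (M \subset F)] -> F \in D.
  by move=> h; apply: (h #|F|.+1).
elim=> // m IH G hG /andP [GV /forall_inP GN].
case: (boolP (G \in D)) => // GnD; exfalso.
have mf : missing_face D G.
  split => // H HG; apply: IH.
    by have := proper_card HG; lia.
  rewrite (subset_trans (proper_sub HG) GV) /=; apply/forall_inP => M MN.
  apply/negP => MH; move: (GN M MN); rewrite (subset_trans MH (proper_sub HG)).
  done.
have := hmiss mf => hc.
case: (leqP #|G| i) => hGi.
  by move: GnD; rewrite hsmall.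
have GinN : G \in NF by rewrite inE GV GnD andbT; apply/eqP; lia.
by move: (GN G GinN); rewrite subxx.
Qed.


Lemma NF_card M : M \in NF -> #|M| = i.+1.
Proof. by rewrite inE => /andP [/andP [_ /eqP]]. Qed.

Lemma NF_sub M : M \in NF -> M \subset VD.
Proof. by rewrite inE => /andP [/andP []]. Qed.

Lemma NF_triv : trivIset NF.
Proof.
apply/trivIsetP => M1 M2 M1N M2N ne; apply/negPn/negP.
rewrite -setI_eq0 => /set0Pn [v]; rewrite inE => /andP [vM1 vM2].
pose g (M : {set V}) := odflt v [pick x in M].
have gM M : M \in NF -> g M \in M.
  move=> MN; rewrite /g; case: pickP => [x -> //|h] /=.
  by move: (NF_card MN); rewrite (eq_card0 h).
pose R := NF :\ M1 :\ M2.
pose H := v |: [set g M | M in R].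
have cR : #|R| + 2 = k.
  rewrite -hN (cardsD1 M1 NF) M1N (cardsD1 M2 (NF :\ M1)) in_setD1 eq_sym ne M2N /=.
  by rewrite /R addn2.
have cH : #|H| <= k.-1.
  rewrite cardsU1; apply: leq_trans (leq_add (leq_b1 _) (leq_imset_card g R)) _; lia.
pose F := VD :\: H.
have cF : k * i < #|F|.
  rewrite cardsD hVD; have := subsetIr VD H => /subset_leq_card; lia.
have FD : F \in D.
  rewrite charD subsetDl /=; apply/forall_inP => M MN; apply/negP => MF.
  case: (boolP (M \in R)) => MR.
    have := subsetP MF _ (gM M MN); rewrite !inE negb_or => /andP [/andP [_ /negP]].
    by move=> h _; apply: h; apply/imsetP; exists M.
  have vM : v \in M.
    by move: MR; rewrite /R !in_setD1 MN andbT negb_and !negbK => /orP [] /eqP ->.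
  by have := subsetP MF _ vM; rewrite !inE eqxx.
by have := hdim FD; lia.
Qed.

Lemma NF_cover : cover NF = VD.
Proof.
apply/eqP; rewrite eqEcard; apply/andP; split.
  by apply/bigcupsP => M /NF_sub.
have := NF_triv; rewrite /trivIset => /eqP <-.
rewrite (eq_bigr (fun _ => i.+1)); last by move=> M /NF_card.
by rewrite sum_nat_const hN hVD.
Qed.

End DSide.

Section Iso.
Variables (V : finType) (D : {set {set V}}) (i d : nat).
Hypothesis i0 : 0 < i.
Hypothesis Hn : S_n i d = (S_q i d).+1 * i.+1.
Hypothesis hcharD : forall F : {set V},
  (F \in D) = (F \subset VD D) && [forall M in NF D i, ~~ (M \subset F)].
Hypothesis htriv : trivIset (NF D i).
Hypothesis hcover : cover (NF D i) = VD D.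
Hypothesis hN : #|NF D i| = (S_q i d).+1.

Let N := NF D i.
Let eN := enum N.
Definition Mv (v : V) : {set V} := odflt set0 [pick M in N | v \in M].
Definition bf v := index (Mv v) eN.
Definition pf v := index v (enum (Mv v)).
Definition fiso v : 'I_(S_n i d) := mkS i d (bf v * i.+1 + pf v).

Lemma size_eN : size eN = (S_q i d).+1.
Proof. by rewrite -cardE. Qed.

Lemma Mv_spec v : v \in VD D -> (Mv v \in N) && (v \in Mv v).
Proof.
rewrite -hcover => /bigcupP [M MN vM]; rewrite /Mv.
case: pickP => [M' /andP [h1 h2] | h] /=; first by rewrite h1 h2.
by move: (h M); rewrite MN vM.
Qed.

Lemma Mv_eq v M : M \in N -> v \in M -> Mv v = M.
Proof.
move=> MN vM.
have vV : v \in VD D by rewrite -hcover; apply/bigcupP; exists M.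
case/andP: (Mv_spec vV) => h1 h2.
apply/eqP; apply/negPn/negP => ne.
move/trivIsetP: htriv => /(_ _ _ h1 MN ne) /disjoint_setI0 /setP /(_ v).
by rewrite !inE h2 vM.
Qed.

Lemma bf_lt v : v \in VD D -> bf v < (S_q i d).+1.
Proof.
move=> /Mv_spec /andP [h _]; rewrite /bf -size_eN index_mem mem_enum //.
Qed.

Lemma pf_lt v : v \in VD D -> pf v < i.+1.
Proof.
move=> /Mv_spec /andP [h1 h2]; rewrite /pf.
have <- : #|Mv v| = i.+1 by move: h1; rewrite inE => /andP [/andP [_ /eqP]].
by rewrite cardE index_mem mem_enum.
Qed.

Lemma fiso_val v : v \in VD D -> val (fiso v) = bf v * i.+1 + pf v.
Proof.
move=> vV; rewrite /fiso mkSK // Hn.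
have := bf_lt vV; have := pf_lt vV; clear; nia.
Qed.

Lemma fiso_div v : v \in VD D -> val (fiso v) %/ i.+1 = bf v.
Proof. by move=> vV; rewrite fiso_val // divK // pf_lt. Qed.

Lemma fiso_inj : {in VD D &, injective fiso}.
Proof.
move=> u v uV vV h.
have hb : bf u = bf v by rewrite -fiso_div // h fiso_div.
have hp : pf u = pf v.
  by have := congr1 val h; rewrite !fiso_val // hb => /addnI.
case/andP: (Mv_spec uV) => u1 u2; case/andP: (Mv_spec vV) => v1 v2.
have u1' : Mv u \in eN by rewrite mem_enum.
have hM : Mv u = Mv v.
  by move: hb; rewrite /bf => hb; rewrite -(nth_index set0 u1') hb nth_index // mem_enum.
have u2' : u \in enum (Mv v) by rewrite mem_enum -hM.
move: hp; rewrite /pf hM => hp.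
by rewrite -(nth_index u u2') hp nth_index // mem_enum.
Qed.

Lemma fiso_block M : M \in N -> fiso @: M = S_block i d (index M eN).
Proof.
move=> MN.
have MV : M \subset VD D by move: MN; rewrite inE => /andP [/andP []].
have cM : #|M| = i.+1 by move: MN; rewrite inE => /andP [/andP [_ /eqP]].
have iM : index M eN < (S_q i d).+1 by rewrite -size_eN index_mem mem_enum.
apply/eqP; rewrite eqEcard block_card // card_in_imset; last first.
  by move=> x y xM yM; apply: fiso_inj; apply: (subsetP MV).
rewrite cM leqnn andbT; apply/subsetP => y /imsetP [x xM ->].
rewrite inE fiso_div ?(subsetP MV) // /bf (Mv_eq MN xM) //.
Qed.

Lemma fiso_onto : fiso @: VD D = [set: 'I_(S_n i d)].
Proof.
apply/eqP; rewrite eqEcard subsetT cardsT card_ord card_in_imset; last exact: fiso_inj.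
rewrite -hcover; have := htriv; rewrite /trivIset => /eqP <-.
rewrite (eq_bigr (fun _ => i.+1)) ?sum_nat_const ?hN ?Hn ?leqnn //.
by move=> M; rewrite inE => /andP [/andP [_ /eqP]].
Qed.

Lemma iso_main : sc_isomorphic D (S_complex i d).
Proof.
exists fiso; split; first exact: fiso_inj.
apply/setP => G; apply/imsetP/idP.
- case=> F FD ->; rewrite inE; apply/forallP => b; apply/negP => hb.
  have bs : b < size eN by rewrite size_eN.
  pose M := nth set0 eN b.
  have MN : M \in N by rewrite -mem_enum mem_nth.
  have hM : fiso @: M = S_block i d b by rewrite fiso_block // index_uniq ?enum_uniq.
  move: FD; rewrite hcharD => /andP [FV /forall_inP /(_ M MN) /negP]; apply.
  have MV : M \subset VD D by move: MN; rewrite inE => /andP [/andP []].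
  apply/subsetP => x xM.
  have : fiso x \in fiso @: F by apply: (subsetP hb); rewrite -hM; apply: imset_f.
  case/imsetP => y yF hxy; rewrite (fiso_inj _ _ hxy) //.
    exact: (subsetP MV).
  exact: (subsetP FV).
- move=> GS; exists (VD D :&: fiso @^-1: G).
    rewrite hcharD subsetIl /=; apply/forall_inP => M MN; apply/negP => MF.
    have iM : index M eN < (S_q i d).+1 by rewrite -size_eN index_mem mem_enum.
    move: GS; rewrite inE => /forallP /(_ (Ordinal iM)) /negP; apply => /=.
    rewrite -fiso_block //; apply/subsetP => y /imsetP [x xM ->].
    by have := subsetP MF x xM; rewrite !inE => /andP [].
  apply/setP => y; apply/idP/imsetP.
  + move=> yG; have : y \in fiso @: VD D by rewrite fiso_onto inE.
    case/imsetP => x xV hy; exists x => //; rewrite !inE xV /= -hy //.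
  + by case=> x; rewrite !inE => /andP [_ h] ->.
Qed.

End Iso.

Lemma D_full (V : finType) (D : {set {set V}}) m :
  #|[set F in D | #|F| == m]| = 'C(#|VD D|, m) ->
  [set F in D | #|F| == m] = [set F : {set V} | F \subset VD D & #|F| == m].
Proof.
move=> h; apply/eqP; rewrite eqEcard cards_draws -h leqnn andbT.
apply/subsetP => F; rewrite !inE => /andP [FD ->]; rewrite andbT.
exact: (bigcup_sup F FD).
Qed.

Theorem theorem1p1 (V : finType) (D : {set {set V}}) (d i : nat) :
  0 < i -> i <= d.+1 -> i %| d.+1 ->
  inC i d D ->
  (forall j : nat, fvec D j = fvec (S_complex i d) j) ->
  sc_isomorphic D (S_complex i d).
Proof.
move=> i0 _ hdv [hsc [_ hdim] _ hmiss] hf.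
have [Hn Hd] := arith i0 hdv.
set k := (S_q i d).+1 in Hn Hd.
have hdim' : forall F, F \in D -> #|F| <= k * i by move=> F /hdim; rewrite Hd.
have hVD : #|VD D| = S_n i d.
  have h0 := hf 0; rewrite fvec_S_small // bin1 in h0.
  have e : [set F in D | #|F| == 1] = [set F : {set V} | F \subset VD D & #|F| == 1].
    apply/eqP; rewrite eqEsubset; apply/andP; split; apply/subsetP => F; rewrite !inE.
      by case/andP => FD ->; rewrite andbT; exact: (bigcup_sup F FD).
    case/andP => FV /cards1P [x Fx]; rewrite Fx cards1 eqxx andbT.
    have : x \in VD D by apply: (subsetP FV); rewrite Fx set11.
    case/bigcupP => G GD xG; apply: hsc.2 GD _; by rewrite sub1set.
  by rewrite -h0 /fvec e cards_draws bin1.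
have hsmall : forall F : {set V}, F \subset VD D -> #|F| <= i -> F \in D.
  move=> F FV; case hc: #|F| => [|m] hm.
    by move/eqP: hc; rewrite cards_eq0 => /eqP ->; exact: hsc.1.
  have h := hf m; rewrite fvec_S_small // -hVD in h.
  have := D_full h => /setP /(_ F); rewrite !inE FV hc eqxx /= andbT => ->.
  done.
have hN : #|NF D i| = k.
  have h := hf i; have := fvec_S_i Hn; rewrite -h -hVD -cards_draws.
  rewrite -(cardsID D [set F : {set V} | F \subset VD D & #|F| == i.+1]).
  have -> : fvec D i = #|[set F : {set V} | F \subset VD D & #|F| == i.+1] :&: D|.
    rewrite /fvec; apply: eq_card => F; rewrite !inE.
    case FD: (F \in D); rewrite ?andbF //= andbT.
    by rewrite (bigcup_sup F FD).
  have -> : NF D i = [set F : {set V} | F \subset VD D & #|F| == i.+1] :\: D.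
    by apply/setP => F; rewrite !inE andbC.
  by move/addnI => <-.
have hVD' : #|VD D| = k * i.+1 by rewrite hVD Hn.
have hcharD := charD hsc i0 hmiss hVD' hsmall hN.
have htriv := NF_triv hsc i0 hmiss hdim' hVD' hsmall hN.
have hcover := NF_cover hsc i0 hmiss hdim' hVD' hsmall hN.
exact: (iso_main Hn hcharD htriv hcover hN).
Qed.
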